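(* Let $t\geq 1$ and let $C=\{a_1,\ldots,a_m\}$ be a fan grounded by a curve $\gamma=\gamma_1\cup\cdots\cup\gamma_m$. If each $a_i$ intersects $\gamma$ in at most $t$ points, then there is a subfan $C'=\{a_{i_1},\ldots,a_{i_r}\}\subseteq C$ with $i_1<\cdots<i_r$ and $r=\lfloor\log_{t+1}m\rfloor$ that is grounded by a subcurve $\gamma'=\gamma'_1\cup\cdots\cup\gamma'_r\subseteq\gamma$ such that (1) $\gamma'_j\supseteq\gamma_{i_j}$ for $1\leq j\leq r$, and (2) $a_{i_j}$ intersects $\gamma'$ only within $\gamma'_1\cup\cdots\cup\gamma'_j$ for $1\leq j\leq r$.
   Context: All curves are simple; no two curves are tangent (a shared interior point is a proper crossing). A fan with apex $v$ is a collection of curves with common endpoint $v$. Let $\gamma$ be a curve with endpoints $p,q$, partitioned into subcurves $\gamma_1,\ldots,\gamma_m$ appearing in this order along $\gamma$ from $p$ to $q$ (consecutive pieces sharing an endpoint). A fan $C=\{a_1,\ldots,a_m\}$ with apex $v$ is grounded by $\gamma_1\cup\cdots\cup\gamma_m$ if $v\notin\gamma$ and each $a_i$ has its other endpoint on $\gamma_i$. It is well-grounded by $\gamma_1\cup\cdots\cup\gamma_m$ if in addition each $a_i$ intersects $\gamma$ only within $\gamma_i$. *)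

(* Defs.v *)
From Stdlib Require Import Reals List.
Open Scope R_scope.

Definition point := (R * R)%type.

Definition continuous_on01 (f : R -> point) : Prop :=
  forall x, 0 <= x <= 1 -> forall eps, eps > 0 ->
    exists delta, delta > 0 /\
      forall y, 0 <= y <= 1 -> Rabs (y - x) < delta ->
        Rabs (fst (f y) - fst (f x)) < eps /\ Rabs (snd (f y) - snd (f x)) < eps.

Definition simple_curve (f : R -> point) : Prop :=
  continuous_on01 f /\
  (forall x y, 0 <= x <= 1 -> 0 <= y <= 1 -> f x = f y -> x = y).

Definition on_arc (f : R -> point) (u w : R) (p : point) : Prop :=
  exists tau, u <= tau <= w /\ f tau = p.

Definition on_curve (f : R -> point) (p : point) : Prop := on_arc f 0 1 p.

(* Main.v *)
Require Import Defs.
From Stdlib Require Import Reals List Lra Lia Classical Arith.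
Open Scope R_scope.


Lemma php (A : Type) (P : nat -> A -> Prop) (l : list A) : forall (S : list nat),
  NoDup S -> (forall k k' p, P k p -> P k' p -> k = k') ->
  (forall k, In k S -> exists p, In p l /\ P k p) -> (length S <= length l)%nat.
Proof.
  induction l as [|p l IH]; intros S HS Hu Hh.
  - destruct S as [|k S]; simpl; [lia|]. destruct (Hh k (or_introl eq_refl)) as [q [[] _]].
  - destruct (classic (exists k, In k S /\ P k p)) as [[k [Hk HP]]|Hn].
    + destruct (in_split _ _ Hk) as [S1 [S2 ->]].
      assert (H1 := NoDup_remove_1 _ _ _ HS). assert (H2 := NoDup_remove_2 _ _ _ HS).
      assert (length (S1 ++ S2) <= length l)%nat.
      { apply IH; auto. intros k' Hk'.
        destruct (Hh k') as [q [[Hq|Hq] HPq]].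
        { apply in_or_app. apply in_app_or in Hk'. simpl. tauto. }
        - subst q. assert (k' = k) by (eapply Hu; eauto). subst. contradiction.
        - eauto. }
      rewrite length_app in *. simpl. lia.
    + assert (length S <= length l)%nat.
      { apply IH; auto. intros k Hk. destruct (Hh k Hk) as [q [[Hq|Hq] HPq]].
        - subst. exfalso; apply Hn; eauto.
        - eauto. }
      simpl. lia.
Qed.

Lemma mono_lt (f : nat -> R) (n : nat) (H : forall i, (1 <= i <= n)%nat -> f (i-1)%nat < f i) :
  forall j i, (i < j)%nat -> (j <= n)%nat -> f i < f j.
Proof.
  induction j; intros i Hij Hj; [lia|].
  assert (Hs := H (S j) ltac:(lia)). replace (S j - 1)%nat with j in Hs by lia.
  destruct (Nat.eq_dec i j); [subst; auto|].
  assert (f i < f j) by (apply IHj; lia). lra.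
Qed.

Lemma mono_le (f : nat -> R) (n : nat) (H : forall i, (1 <= i <= n)%nat -> f (i-1)%nat < f i) :
  forall i j, (i <= j)%nat -> (j <= n)%nat -> f i <= f j.
Proof.
  intros i j Hij Hj. destruct (Nat.eq_dec i j); [subst; lra|].
  left. apply (mono_lt f n H); lia.
Qed.

Lemma arc_mono (g : R -> point) u w u' w' p : u' <= u -> w <= w' -> on_arc g u w p -> on_arc g u' w' p.
Proof. intros H1 H2 [tau [Ht Hg]]. exists tau. split; [lra|auto]. Qed.

Definition good (gamma : R -> point) (s : nat -> R) (a : nat -> R -> point)
  (r lo hi : nat) (idx : nat -> nat) (u : nat -> R) : Prop :=
 u 0%nat = s (lo-1)%nat /\
 (exists e, (lo - 1 <= e <= hi)%nat /\ u r = s e) /\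
 (forall j, (1<=j<=r)%nat -> (lo <= idx j <= hi)%nat) /\
 (forall j, (1<=j<r)%nat -> (idx j < idx (j+1))%nat) /\
 (forall j, (1<=j<=r)%nat -> u (j-1)%nat < u j) /\
 (forall j, (1<=j<=r)%nat -> u (j-1)%nat <= s (idx j - 1)%nat /\ s (idx j) <= u j) /\
 (forall j, (1<=j<=r)%nat -> forall p, on_curve (a (idx j)) p ->
     on_arc gamma (u 0%nat) (u r) p -> on_arc gamma (u 0%nat) (u j) p).

Lemma main_ind (t m : nat) (gamma : R -> point) (s : nat -> R) (a : nat -> R -> point)
 (Ht : (1<=t)%nat)
 (Hinj : forall x y, 0<=x<=1 -> 0<=y<=1 -> gamma x = gamma y -> x = y)
 (Hs0 : s 0%nat = 0) (Hsm : s m = 1)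
 (Hs : forall i, (1<=i<=m)%nat -> s(i-1)%nat < s i)
 (Hend : forall i, (1<=i<=m)%nat -> on_arc gamma (s(i-1)%nat) (s i) (a i 1))
 (Hl : forall i, (1 <= i <= m)%nat ->
     exists l : list point, (length l <= t)%nat /\
       forall p, on_curve (a i) p -> on_curve gamma p -> In p l) :
 forall r lo hi, (1<=lo)%nat -> (hi<=m)%nat -> (lo + (t+1)^r <= hi+1)%nat ->
   exists idx u, good gamma s a r lo hi idx u.
Proof.
  assert (sle := mono_le s m Hs). assert (slt := mono_lt s m Hs).
  induction r as [|r IH]; intros lo hi Hlo Hhi Hsz.
  - exists (fun _ => lo), (fun _ => s (lo-1)%nat).
    repeat split; try (intros; lia).
    + exists (lo-1)%nat. split; [lia|reflexivity].
  - set (N := ((t+1)^r)%nat) in *.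
    assert (HN : (N >= 1)%nat) by (assert (N <> 0%nat) by (apply Nat.pow_nonzero; lia); lia).
    rewrite Nat.pow_succ_r' in Hsz. fold N in Hsz.
    assert (Hlohi : (lo <= hi)%nat) by nia.
    destruct (Hl lo ltac:(lia)) as [l [Hlen Hl']].
    destruct (Hend lo ltac:(lia)) as [tau0 [Ht0 Hg0]].
    assert (s01 : forall i, (i <= m)%nat -> 0 <= s i <= 1).
    { intros i Hi. rewrite <- Hs0, <- Hsm. split; apply sle; lia. }
    assert (HK : exists K, (K < t)%nat /\ forall p, In p l ->
       ~ (exists tau, s (lo + K*N)%nat < tau <= s (lo+K*N+N)%nat /\ gamma tau = p)).
    { apply NNPP; intro Hno.
      assert (Hall : forall K, (K < t)%nat -> exists p, In p l /\
         (exists tau, s (lo + K*N)%nat < tau <= s (lo+K*N+N)%nat /\ gamma tau = p)).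
      { intros K HKt. apply NNPP; intro H0. apply Hno. exists K. split; [lia|].
        intros p Hp Hh. apply H0. eauto. }
      set (P := fun (k : nat) (p : point) => (k = 0%nat /\ p = a lo 1) \/
          (exists K, k = S K /\ (K < t)%nat /\
            exists tau, s (lo + K*N)%nat < tau <= s (lo+K*N+N)%nat /\ gamma tau = p)).
      assert (Hp := php point P l (seq 0 (S t)) (seq_NoDup _ _)).
      rewrite length_seq in Hp.
      enough (S t <= length l)%nat by lia.
      apply Hp.
      - intros k k' p Hk Hk'.
        assert (Hsep : forall K, (K < t)%nat -> forall tau, s (lo + K*N)%nat < tau <= s (lo+K*N+N)%nat ->
                 gamma tau = a lo 1 -> False).
        { intros K HKt tau Htau Hg. rewrite <- Hg0 in Hg.
          assert (s lo <= s (lo + K*N)%nat) by (apply sle; nia).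
          assert (0 <= s (lo-1)%nat) by (apply s01; lia).
          assert (s (lo+K*N+N)%nat <= 1) by (apply s01; nia).
          assert (s lo <= 1) by (apply s01; lia).
          assert (tau = tau0) by (apply Hinj; auto; lra). lra. }
        destruct Hk as [[-> Hp0]|[K [-> [HKt [tau [Htau Hg]]]]]];
        destruct Hk' as [[-> Hp']|[K' [-> [HKt' [tau' [Htau' Hg']]]]]].
        + reflexivity.
        + exfalso. subst p. eapply Hsep; eauto.
        + exfalso. subst p. eapply Hsep; eauto. 
        + f_equal.
          assert (0 <= s (lo + K*N)%nat) by (apply s01; nia).
          assert (s (lo+K*N+N)%nat <= 1) by (apply s01; nia).
          assert (0 <= s (lo + K'*N)%nat) by (apply s01; nia).
          assert (s (lo+K'*N+N)%nat <= 1) by (apply s01; nia).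
          assert (tau = tau') by (apply Hinj; [lra|lra|congruence]). subst tau'.
          destruct (lt_eq_lt_dec K K') as [[Hlt|]|Hlt]; auto; exfalso.
          * assert (s (lo+K*N+N)%nat <= s (lo + K'*N)%nat) by (apply sle; nia). lra.
          * assert (s (lo+K'*N+N)%nat <= s (lo + K*N)%nat) by (apply sle; nia). lra.
      - intros k Hk. apply in_seq in Hk. destruct k as [|K].
        + exists (a lo 1). split.
          * apply Hl'. exists 1. split; [lra|reflexivity].
            exists tau0. split; [|auto].
            assert (0 <= s (lo-1)%nat) by (apply s01; lia).
            assert (s lo <= 1) by (apply s01; lia). lra.
          * left; auto.
        + destruct (Hall K ltac:(lia)) as [p [Hp1 Hp2]]. exists p. split; auto.
          right. exists K. split; [reflexivity|split; [lia|exact Hp2]]. }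
    destruct HK as [K [HKt HK]].
    destruct (IH (lo + K*N + 1)%nat (lo + K*N + N)%nat ltac:(lia) ltac:(nia) ltac:(lia))
      as [idx' [u' [G0 [[e [He Gr]] [Gidx [Ginc [Gu [Gc G2]]]]]]]].
    replace (lo + K * N + 1 - 1)%nat with (lo + K*N)%nat in G0 by lia.
    exists (fun j => match j with 0%nat => lo | S j' => match j' with 0%nat => lo | S _ => idx' j' end end).
    exists (fun j => match j with 0%nat => s (lo-1)%nat | S j' => u' j' end).
    assert (u'le : forall i j, (i <= j)%nat -> (j <= r)%nat -> u' i <= u' j) by (apply mono_le; auto).
    split; [reflexivity|].
    split; [exists e; split; [nia|]; exact Gr|].
    split.
    { intros j Hj. destruct j as [|[|j]]; [lia|simpl; lia|]. specialize (Gidx (S j) ltac:(lia)). nia. }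
    split.
    { intros j Hj. destruct j as [|[|j]]; [lia| |].
      * specialize (Gidx 1%nat ltac:(lia)). simpl. lia.
      * specialize (Ginc (S j) ltac:(lia)). replace (S (S j) + 1)%nat with (S (S (j+1))) by lia.
        replace (S j + 1)%nat with (S (j+1)) in Ginc by lia. exact Ginc. }
    split.
    { intros j Hj. destruct j as [|[|j]]; [lia| |].
      * simpl. rewrite G0. apply slt; nia.
      * specialize (Gu (S j) ltac:(lia)). replace (S (S j) - 1)%nat with (S j) by lia.
        replace (S j - 1)%nat with j in Gu by lia. exact Gu. }
    split.
    { intros j Hj. destruct j as [|[|j]]; [lia| |].
      * simpl. split; [right; reflexivity|]. rewrite G0. apply sle; nia.
      * specialize (Gc (S j) ltac:(lia)). replace (S (S j) - 1)%nat with (S j) by lia.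
        replace (S j - 1)%nat with j in Gc by lia. exact Gc. }
    intros j Hj p Hpa [tau [Htau Hg]].
      destruct j as [|[|j]]; [lia| |].
      * destruct (Rle_dec tau (u' 0%nat)) as [Hle|Hgt].
        { exists tau. split; [lra|auto]. }
        exfalso. apply (HK p).
        -- apply Hl'; auto. exists tau. split; [|auto].
           assert (0 <= s (lo-1)%nat) by (apply s01; lia).
           assert (s e <= 1) by (apply s01; nia). lra.
        -- exists tau. split; [|auto]. split; [lra|].
           assert (s e <= s (lo+K*N+N)%nat) by (apply sle; nia). lra.
      * destruct (Rle_dec tau (u' 0%nat)) as [Hle|Hgt].
        { exists tau. split; [|auto]. assert (u' 0%nat <= u' (S j)) by (apply u'le; lia). lra. }
        assert (Ha : on_arc gamma (u' 0%nat) (u' (S j)) p).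
        { apply (G2 (S j) ltac:(lia)); auto. exists tau. split; [lra|auto]. }
        eapply arc_mono; [| |exact Ha].
        -- rewrite G0. apply sle; nia.
        -- lra.
Qed.

Theorem mainTheorem5
  (t m : nat) (gamma : R -> point) (s : nat -> R) (v : point)
  (a : nat -> R -> point) :
  (1 <= t)%nat ->
  (1 <= m)%nat ->
  simple_curve gamma ->
  (* gamma = gamma_1 u ... u gamma_m, gamma_i = gamma([s (i-1), s i]) *)
  s 0%nat = 0 -> s m = 1 ->
  (forall i, (1 <= i <= m)%nat -> s (i - 1)%nat < s i) ->
  (* C = {a_1,...,a_m} is a fan with apex v = a_i 0 *)
  (forall i, (1 <= i <= m)%nat -> simple_curve (a i) /\ a i 0 = v) ->
  (* grounded by gamma_1 u ... u gamma_m *)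
  ~ on_curve gamma v ->
  (forall i, (1 <= i <= m)%nat -> on_arc gamma (s (i - 1)%nat) (s i) (a i 1)) ->
  (* each a_i meets gamma in at most t points *)
  (forall i, (1 <= i <= m)%nat ->
     exists l : list point, (length l <= t)%nat /\
       forall p, on_curve (a i) p -> on_curve gamma p -> In p l) ->
  (* r = floor(log_{t+1} m) *)
  forall r : nat, ((t + 1) ^ r <= m < (t + 1) ^ (r + 1))%nat ->
  exists (idx : nat -> nat) (u : nat -> R),
    (* subfan C' = {a_{idx 1}, ..., a_{idx r}}, idx 1 < ... < idx r *)
    (forall j, (1 <= j <= r)%nat -> (1 <= idx j <= m)%nat) /\
    (forall j, (1 <= j < r)%nat -> (idx j < idx (j + 1))%nat) /\
    (* gamma' = gamma([u 0, u r]) subset gamma, gamma'_j = gamma([u (j-1), u j]) *)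
    0 <= u 0%nat /\ u r <= 1 /\
    (forall j, (1 <= j <= r)%nat -> u (j - 1)%nat < u j) /\
    (* C' grounded by gamma'_1 u ... u gamma'_r *)
    ~ on_arc gamma (u 0%nat) (u r) v /\
    (forall j, (1 <= j <= r)%nat ->
       on_arc gamma (u (j - 1)%nat) (u j) (a (idx j) 1)) /\
    (* (1) gamma'_j contains gamma_{i_j} *)
    (forall j, (1 <= j <= r)%nat -> forall p,
       on_arc gamma (s (idx j - 1)%nat) (s (idx j)) p ->
       on_arc gamma (u (j - 1)%nat) (u j) p) /\
    (* (2) a_{i_j} meets gamma' only within gamma'_1 u ... u gamma'_j *)
    (forall j, (1 <= j <= r)%nat -> forall p,
       on_curve (a (idx j)) p -> on_arc gamma (u 0%nat) (u r) p ->
       on_arc gamma (u 0%nat) (u j) p).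
Proof.
  intros Ht Hm Hg Hs0 Hsm Hs Ha Hv Hend Hl r Hr.
  destruct Hg as [_ Hinj].
  assert (sle := mono_le s m Hs).
  destruct (main_ind t m gamma s a Ht Hinj Hs0 Hsm Hs Hend Hl r 1%nat m ltac:(lia) ltac:(lia) ltac:(lia))
    as [idx [u [G0 [[e [He Gr]] [Gidx [Ginc [Gu [Gc G2]]]]]]]].
  simpl in G0. rewrite Hs0 in G0.
  assert (Hur : u r <= 1) by (rewrite Gr, <- Hsm; apply sle; lia).
  exists idx, u.
  split; [intros j Hj; specialize (Gidx j Hj); lia|].
  split; [exact Ginc|].
  split; [lra|]. split; [exact Hur|]. split; [exact Gu|].
  split.
  { intro H. apply Hv. eapply arc_mono; [| |exact H]; lra. }
  split.
  { intros j Hj. destruct (Gc j Hj). specialize (Gidx j Hj).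
    eapply arc_mono; [eauto|eauto|apply Hend; lia]. }
  split.
  { intros j Hj p Hp. destruct (Gc j Hj). eapply arc_mono; [| |exact Hp]; eauto. }
  exact G2.
Qed.
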